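(* Let $\Omega\subseteq\mathbb{R}^N$ be an open set and let $f:\Omega\times\mathbb{R}^d\times\mathbb{R}^k\to[0,+\infty)$ be a normal integrand. Then for every Young measure $\mu=(\mu_x)_{x\in\Omega}$ on $\mathbb{R}^k$ and every measurable function $v:\Omega\to\mathbb{R}^d$, $$\lim_{q\to\infty}\Big(\int_\Omega\int_{\mathbb{R}^k}f(x,v(x),\xi)^q\,d\mu_x(\xi)\,dx\Big)^{1/q}=\operatorname*{ess\,sup}_{x\in\Omega}\Big(\mu_x\text{-}\operatorname*{ess\,sup}_{\xi\in\mathbb{R}^k}f(x,v(x),\xi)\Big).$$
   Context: A function $f:\Omega\times\mathbb{R}^d\times\mathbb{R}^k\to\mathbb{R}$ is a normal integrand if it is $\mathcal{L}^N\otimes\mathcal{B}_d\otimes\mathcal{B}_k$-measurable and $f(x,\cdot,\cdot)$ is lower semicontinuous for a.e. $x\in\Omega$. A Young measure on $\Omega$ (with values in $\mathbb{R}^k$) is a map $x\mapsto\mu_x$ from $\Omega$ into the nonnegative Radon measures on $\mathbb{R}^k$ which is weak$^*$-measurable (i.e. $x\mapsto\int\varphi\,d\mu_x$ is measurable for every continuous compactly supported $\varphi$) and satisfies $\mu_x(\mathbb{R}^k)\le1$ for a.e. $x$, as generated (via the fundamental theorem on Young measures) by a sequence of measurable functions $V_n:\Omega\to\mathbb{R}^k$. $\mu_x\text{-}\operatorname{ess\,sup}$ denotes the essential supremum with respect to the measure $\mu_x$.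
   Formalization: The open set Ω also has finite Lebesgue measure, and each essential supremum is taken in [0,+∞], as inf{M ≥ 0 : g ≤ M a.e.}. Apart from conventions, each condition added here is assumed in the paper as well or is needed for the statement above to hold. *)

(* Defs.v *)
From HB Require Import structures.
From mathcomp Require Import all_boot all_order all_algebra.
From mathcomp Require Import all_classical all_reals all_analysis.
From mathcomp Require Import measurable_realfun.

Set Implicit Arguments.
Unset Strict Implicit.
Unset Printing Implicit Defensive.

Import Order.TTheory GRing.Theory Num.Theory.
Import numFieldNormedType.Exports.

Local Open Scope classical_set_scope.
Local Open Scope ring_scope.

Definition Borel (R : realType) (n : nat) :=
  g_sigma_algebraType (@open 'rV[R]_n).

Definition box (R : realType) (n : nat) (a b : 'rV[R]_n) : set 'rV[R]_n :=
  [set x | forall i : 'I_n, a ord0 i <= x ord0 i < b ord0 i].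

(** Elementary volume: 0 on the empty set, the usual volume on nonempty
    boxes, +oo on all other Borel sets (so that only box covers count in
    the outer measure below). *)
Definition box_vol (R : realType) (n : nat) (A : set (Borel R n)) : \bar R :=
  ereal_inf ([set v | A = set0 /\ v = 0%E] `|`
    [set v | exists a b : 'rV[R]_n, (forall i, a ord0 i < b ord0 i) /\
             A = box a b /\ v = (\prod_(i < n) (b ord0 i - a ord0 i))%:E]).

Lemma box_vol0 (R : realType) (n : nat) : box_vol (set0 : set (Borel R n)) = 0%E.
Proof.
apply/eqP; rewrite eq_le; apply/andP; split.
  by apply: ereal_inf_lbound; left.
apply: le_ereal_inf_tmp => v [[_ ->]//|[a [b [ab [+ ->]]]]].
move=> /(congr1 (fun A : set 'rV[R]_n => A a)) /=.
rewrite /box /= => /esym H; exfalso; rewrite -H => i.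
by rewrite lexx ab.
Qed.

Lemma box_vol_ge0 (R : realType) (n : nat) (A : set (Borel R n)) :
  (0 <= box_vol A)%E.
Proof.
apply: le_ereal_inf_tmp => v [[_ ->]//|[a [b [ab [_ ->]]]]].
rewrite lee_fin; apply: prodr_ge0 => i _.
by rewrite subr_ge0 ltW.
Qed.

Definition lebesgue_outer (R : realType) (n : nat) : set (Borel R n) -> \bar R :=
  mu_ext (@box_vol R n).
Arguments lebesgue_outer : clear implicits.

Section lebesgue_outer_instance.
Variables (R : realType) (n : nat).
HB.instance Definition _ :=
  isOuterMeasure.Build R (Borel R n) (lebesgue_outer R n)
    (@mu_ext0 _ _ _ _ (@box_vol0 R n) (@box_vol_ge0 R n))
    (mu_ext_ge0 (@box_vol_ge0 R n))
    (le_mu_ext (@box_vol R n))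
    (mu_ext_sigma_subadditive (@box_vol_ge0 R n)).
End lebesgue_outer_instance.

Definition Leb (R : realType) (n : nat) := caratheodory_type (lebesgue_outer R n).

Arguments Leb : clear implicits.

Definition lebesgueN (R : realType) (n : nat) : set (Leb R n) -> \bar R :=
  lebesgue_outer R n.
Arguments lebesgueN : clear implicits.

Section lebesgueN_instance.
Variables (R : realType) (n : nat).
HB.instance Definition _ := isMeasure.Build _ (Leb R n) R (lebesgueN R n)
  (@caratheodory_measure0 R (Borel R n) (lebesgue_outer R n))
  (@caratheodory_measure_ge0 R (Borel R n) (lebesgue_outer R n))
  (@caratheodory_measure_sigma_additive R (Borel R n) (lebesgue_outer R n)).
End lebesgueN_instance.

Local Open Scope ereal_scope.

Definition esssup (dT : measure_display) (T : measurableType dT) (R : realType)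
    (mu : {measure set T -> \bar R}) (D : set T) (g : T -> \bar R) : \bar R :=
  ereal_inf [set M : \bar R | 0 <= M /\ (\forall x \ae mu, D x -> g x <= M)].

Definition normal_integrand (R : realType) (N d k : nat) (Omega : set 'rV[R]_N)
    (f : 'rV[R]_N -> 'rV[R]_d -> 'rV[R]_k -> R) : Prop :=
  measurable_fun ((Omega : set (Leb R N)) `*` [set: Borel R d * Borel R k])
    (fun p : Leb R N * (Borel R d * Borel R k) => f p.1 p.2.1 p.2.2)
  /\ (\forall x \ae lebesgueN R N, Omega x ->
        lower_semicontinuous (fun p : 'rV[R]_d * 'rV[R]_k => (f x p.1 p.2)%:E)).

(** Young measure on Omega with values in R^k: a family of nonnegative Radon
    (= locally finite Borel) measures mu_x on R^k, weak-* measurable, with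
    mu_x(R^k) <= 1 for a.e. x. *)
Definition young_measure (R : realType) (N k : nat) (Omega : set 'rV[R]_N)
    (mu : 'rV[R]_N -> {measure set (Borel R k) -> \bar R}) : Prop :=
  [/\ (forall x, Omega x -> forall K : set 'rV[R]_k, compact K -> mu x K < +oo),
      (forall phi : 'rV[R]_k -> R, continuous phi ->
         compact (closure [set xi | phi xi != 0%R]) ->
         @measurable_fun _ _ (Leb R N) (\bar R) Omega
           (fun x => \int[mu x]_xi (phi xi)%:E))
    & (\forall x \ae lebesgueN R N, Omega x -> mu x [set: Borel R k] <= 1)].

(* Main.v *)
Require Import Defs.
From HB Require Import structures.
From mathcomp Require Import all_boot all_order all_algebra.
From mathcomp Require Import all_classical all_reals all_analysis.
From mathcomp Require Import measurable_realfun.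
From mathcomp Require Import lra.

Import Order.TTheory GRing.Theory Num.Theory.
Import numFieldNormedType.Exports.

Local Open Scope classical_set_scope.
Local Open Scope ring_scope.
Set Implicit Arguments.
Unset Strict Implicit.
Unset Printing Implicit Defensive.
Lemma split_len (R : realType) (x y c : R) : x < y ->
  Num.max (Num.min y c - x) 0 + Num.max (y - Num.max x c) 0 = y - x.
Proof.
move=> xy.
case: (leP c x) => cx.
  have cy : c <= y by apply: le_trans (ltW xy).
  rewrite ?(min_r cy) ?(max_l cx) (max_r (_ : c - x <= 0)) ?subr_le0 //.
  rewrite max_l ?subr_ge0 ?(ltW xy) //; by rewrite add0r.
case: (leP c y) => cy.
  rewrite ?(min_r cy) ?(max_r (ltW cx)) max_l ?subr_ge0 ?(ltW cx) //.
  rewrite max_l ?subr_ge0 //; lra.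
rewrite ?(min_l (ltW cy)) ?(max_r (ltW cx)) max_l ?subr_ge0 ?(ltW xy) //.
by rewrite max_r ?addr0 // subr_le0 ltW.
Qed.

Section PartA.
Variables (R : realType) (n : nat).
Local Open Scope ereal_scope.

Lemma box_vol_le (a b : 'rV[R]_n) :
  box_vol (box a b : set (Borel R n)) <=
    (\prod_(i < n) Num.max (b ord0 i - a ord0 i) 0%R)%:E.
Proof.
have [ab|] := pselect (forall i, (a ord0 i < b ord0 i)%R).
  apply: ereal_inf_lbound; right; exists a, b; split => //; split => //.
  congr EFin; apply: eq_bigr => i _; rewrite max_l // subr_ge0 ltW //.
move=> /existsNP[i /negP]; rewrite -leNgt => ba.
have -> : box a b = set0.
  apply/seteqP; split => // x /(_ i) /andP[h1 h2].
  by have := lt_le_trans h2 ba; rewrite ltNge h1.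
rewrite box_vol0 lee_fin; apply: prodr_ge0 => j _.
by rewrite le_max lexx orbT.
Qed.

Definition hs (i : 'I_n) (c : R) : set 'rV[R]_n := [set x | (x ord0 i < c)%R].

Lemma box_vol_split (F : set (Borel R n)) i c :
  box_vol (F `&` hs i c) + box_vol (F `&` ~` hs i c) <= box_vol F.
Proof.
apply: le_ereal_inf_tmp => v [[-> ->]|[a [b [ab [-> ->]]]]].
  by rewrite !set0I box_vol0 adde0.
pose b1 := \row_j (if j == i then Num.min (b ord0 j) c else b ord0 j).
pose a1 := \row_j (if j == i then Num.max (a ord0 j) c else a ord0 j).
have E1 : box a b `&` hs i c = box a b1.
  apply/seteqP; split => x /=.
    move=> [Hb Hc] j; rewrite mxE; case: (eqVneq j i) => [->|ji]; last exact: Hb.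
    by rewrite lt_min Hc andbT; exact: Hb.
  move=> H; split.
    move=> j; have := H j; rewrite mxE; case: (eqVneq j i) => [->|ji] //.
    by rewrite lt_min => /andP[-> /andP[]].
  by have := H i; rewrite mxE eqxx lt_min => /andP[_ /andP[]].
have E2 : box a b `&` ~` hs i c = box a1 b.
  apply/seteqP; split => x /=.
    move=> [Hb Hc] j; rewrite mxE; case: (eqVneq j i) => [->|ji]; last exact: Hb.
    rewrite ge_max; have /andP[-> ->] := Hb i; rewrite andbT /=.
    by rewrite leNgt; apply/negP.
  move=> H; split.
    move=> j; have := H j; rewrite mxE; case: (eqVneq j i) => [->|ji] //.
    by rewrite ge_max => /andP[/andP[-> _] ->].
  have := H i; rewrite mxE eqxx ge_max => /andP[/andP[_ ci] _].
  by rewrite /hs /= ltNge ci.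
rewrite E1 E2; apply: le_trans (leeD (box_vol_le a b1) (box_vol_le a1 b)) _.
rewrite -EFinD lee_fin (bigD1 i) //= [in X in (_ + X)%R](bigD1 i) //=.
rewrite [leRHS](bigD1 i) //= !mxE eqxx.
have -> : (\prod_(j < n | j != i) Num.max (b1 ord0 j - a ord0 j) 0 =
          \prod_(j < n | j != i) (b ord0 j - a ord0 j))%R.
  apply: eq_bigr => j ji; rewrite mxE (negbTE ji) max_l // subr_ge0 ltW //.
have -> : (\prod_(j < n | j != i) Num.max (b ord0 j - a1 ord0 j) 0 =
          \prod_(j < n | j != i) (b ord0 j - a ord0 j))%R.
  apply: eq_bigr => j ji; rewrite mxE (negbTE ji) max_l // subr_ge0 ltW //.
by rewrite -mulrDl split_len.
Qed.

Lemma open_hs i c : open (hs i c).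
Proof.
apply: (@open_comp _ _ (fun x : 'rV[R]_n => x ord0 i) [set y | (y < c)%R]).
  by move=> x _; exact: coord_continuous.
exact: open_lt.
Qed.

Lemma Borel_open (A : set 'rV[R]_n) : open A -> measurable (A : set (Borel R n)).
Proof. by move=> oA; exact: sub_sigma_algebra. Qed.

Lemma hs_cara i c : (lebesgue_outer R n).-caratheodory (hs i c).
Proof.
apply: le_caratheodory_measurable => X.
apply: le_ereal_inf_tmp => _ [A [mA XA] <-].
have mH : measurable (hs i c : set (Borel R n)) by apply: Borel_open; exact: open_hs.
apply: le_trans (leeD (ereal_inf_lbound _) (ereal_inf_lbound _)) _.
- exists (fun k => A k `&` hs i c) => //; split.
    by move=> k; exact: measurableI.
  by move=> x [/XA [k _ Akx] hx]; exists k.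
- exists (fun k => A k `&` ~` hs i c) => //; split.
    by move=> k; apply: measurableI => //; exact: measurableC.
  by move=> x [/XA [k _ Akx] hx]; exists k.
rewrite -nneseriesD; last 2 first.
  by move=> k _ _; exact: box_vol_ge0.
  by move=> k _ _; exact: box_vol_ge0.
by apply: lee_nneseries => k _; [rewrite adde_ge0 // box_vol_ge0|exact: box_vol_split].
Qed.

End PartA.
Arguments hs {R n}.

Section Boxes.
Variables (R : realType) (n : nat).

Definition obox (a b : 'rV[R]_n) : set 'rV[R]_n :=
  [set x | forall i, a ord0 i < x ord0 i < b ord0 i].

Definition rr (p : 'rV[rat]_n) : 'rV[R]_n := map_mx ratr p.

Definition ratbox (U : set 'rV[R]_n) (pq : 'rV[rat]_n * 'rV[rat]_n) : set 'rV[R]_n :=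
  [set x | obox (rr pq.1) (rr pq.2) `<=` U /\ obox (rr pq.1) (rr pq.2) x].

Lemma ratbox_cases U pq : ratbox U pq = set0 \/ ratbox U pq = obox (rr pq.1) (rr pq.2).
Proof.
have [sub|nsub] := pselect (obox (rr pq.1) (rr pq.2) `<=` U).
  by right; apply/seteqP; split => [x [] //|x ?]; split.
by left; apply/seteqP; split => [x [] //|x ?].
Qed.

Lemma open_ratbox (U : set 'rV[R]_n) : open U -> U = \bigcup_pq ratbox U pq.
Proof.
move=> oU; apply/seteqP; split; last by move=> x [pq _ [sub bx]]; exact: sub.
move=> x Ux.
have : nbhs x U by apply: (@open_nbhs_nbhs _ x U); split.
move=> /nbhs_ballP[e /= e0 exU].
have hp i : x ord0 i - e < x ord0 i by rewrite ltrBlDr ltrDl.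
have hq i : x ord0 i < x ord0 i + e by rewrite ltrDl.
pose p := \row_i projT1 (cid (rat_in_itvoo (hp i))).
pose q := \row_i projT1 (cid (rat_in_itvoo (hq i))).
have Hp i : x ord0 i - e < rr p ord0 i < x ord0 i.
  rewrite /rr !mxE; case: cid => r /=; rewrite in_itv /=; done.
have Hq i : x ord0 i < rr q ord0 i < x ord0 i + e.
  rewrite /rr !mxE; case: cid => r /=; rewrite in_itv /=; done.
exists (p, q) => //; split => /=.
  move=> y yb; apply: exU; split => // i j; rewrite (ord1 i) /ball /=.
  have /andP[h1 h2] := yb j; have /andP[h3 h4] := Hp j; have /andP[h5 h6] := Hq j.
  rewrite ltr_norml; apply/andP; split; lra.
move=> i; have /andP[h3 h4] := Hp i; have /andP[h5 h6] := Hq i.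
by rewrite h4 h5.
Qed.

End Boxes.
Arguments obox {R n}.
Arguments rr {R n}.
Arguments ratbox {R n}.
Arguments open_ratbox {R n U}.
Arguments ratbox_cases {R n}.

Section LebOpen.
Variables (R : realType) (n : nat).

Lemma Leb_hs i c : measurable (hs i c : set (Leb R n)).
Proof. exact: hs_cara. Qed.

Lemma Leb_obox (a b : 'rV[R]_n) : measurable (obox a b : set (Leb R n)).
Proof.
have -> : obox a b = \bigcap_(i in [set: 'I_n])
    (hs i (b ord0 i) `&` \bigcup_m ~` hs i (a ord0 i + m.+1%:R^-1)).
  apply/seteqP; split => x.
    move=> H i _; have /andP[h1 h2] := H i; split => //.
    have [m hm] := ltr_add_invr h1; exists m => //; rewrite /hs /= ltNge.
    by rewrite (ltW hm).
  move=> H i; have [h1 [m _ h2]] := H i Logic.I.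
  rewrite h1 andbT; move: h2; rewrite /hs /= ltNge => /negP; rewrite negbK.
  apply: lt_le_trans; rewrite ltrDl invr_gt0 ltr0n //.
apply: fin_bigcap_measurable; first exact: finite_finset.
move=> i _; apply: measurableI; first exact: Leb_hs.
by apply: bigcupT_measurable => m; apply: measurableC; exact: Leb_hs.
Qed.

Lemma Leb_open (U : set 'rV[R]_n) : open U -> measurable (U : set (Leb R n)).
Proof.
move=> oU; rewrite (open_ratbox oU).
apply: countable_bigcupT_measurable; first exact: countableP.
by move=> pq; case: (ratbox_cases U pq) => ->; [exact: measurable0|exact: Leb_obox].
Qed.

End LebOpen.

Section Bump.
Variable R : realType.

Definition psi (m : nat) (a b t : R) : R :=
  Num.min 1 (Num.max 0 (m%:R * Num.min (t - a) (b - t))).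

Lemma psi_ge0 m a b t : 0 <= psi m a b t.
Proof. by rewrite /psi le_min ler01 le_max lexx. Qed.

Lemma psi_le1 m a b t : psi m a b t <= 1.
Proof. by rewrite /psi ge_min lexx. Qed.

Lemma psi_nd m m' a b t : (m <= m')%N -> psi m a b t <= psi m' a b t.
Proof.
move=> mm'; rewrite /psi.
have XY : m%:R * Num.min (t - a) (b - t) <= Num.max 0 (m'%:R * Num.min (t - a) (b - t)).
  case: (leP (Num.min (t - a) (b - t)) 0) => d0.
    by rewrite le_max; apply/orP; left; rewrite mulr_ge0_le0 // ler0n.
  rewrite le_max; apply/orP; right; rewrite ler_pM2r // ler_nat //.
rewrite le_min ge_min lexx /= ge_min; apply/orP; right.
by rewrite ge_max le_max lexx /= XY.
Qed.

Lemma psi_out m a b t : ~~ (a < t < b) -> psi m a b t = 0.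
Proof.
move=> H; rewrite /psi.
have : Num.min (t - a) (b - t) <= 0.
  rewrite ge_min !subr_le0; move: H; rewrite negb_and -!leNgt.
  by case/orP => ->; rewrite ?orbT.
move=> d0; rewrite (@max_l _ _ 0); last by rewrite mulr_ge0_le0.
by rewrite min_r ?ler01.
Qed.

Lemma psi_in a b t : a < t < b -> exists K, forall m, (K <= m)%N -> psi m a b t = 1.
Proof.
move=> /andP[hat htb].
have d0 : 0 < Num.min (t - a) (b - t) by rewrite lt_min !subr_gt0 hat htb.
have [K hK] := ltr_add_invr d0; rewrite add0r in hK.
exists K.+1 => m Km; rewrite /psi min_l //.
rewrite le_max; apply/orP; right.
have : 1 < K.+1%:R * Num.min (t - a) (b - t).
  by rewrite -ltr_pdivrMl ?ltr0n // mulr1.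
move=> /ltW h; apply: le_trans h _; rewrite ler_pM2r // ler_nat //.
Qed.

Lemma psi_cont m a b : continuous (psi m a b).
Proof.
move=> t; rewrite /psi.
apply: (@continuous_min _ _ (fun=> 1) (fun t => Num.max 0 (m%:R * Num.min (t - a) (b - t)))).
  exact: cst_continuous.
apply: (@continuous_max _ _ (fun=> 0) (fun t => m%:R * Num.min (t - a) (b - t))).
  exact: cst_continuous.
apply: (@continuousM _ _ (fun=> m%:R) (fun t => Num.min (t - a) (b - t))).
  exact: cst_continuous.
apply: (@continuous_min _ _ (fun t => t - a) (fun t => b - t)).
  by apply: continuousB; [exact: cvg_id|exact: cst_continuous].
by apply: continuousB; [exact: cst_continuous|exact: cvg_id].
Qed.

End Bump.
Arguments psi {R}.

Section Phi.
Variables (R : realType) (k : nat).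
Implicit Types (a b x : 'rV[R]_k).

Definition phi (m : nat) a b x : R :=
  \prod_(i < k) psi m (a ord0 i) (b ord0 i) (x ord0 i).

Lemma phi_ge0 m a b x : 0 <= phi m a b x.
Proof. by apply: prodr_ge0 => i _; exact: psi_ge0. Qed.

Lemma phi_le1 m a b x : phi m a b x <= 1.
Proof. by apply: prodr_ile1 => i _; rewrite psi_ge0 psi_le1. Qed.

Lemma phi_nd m m' a b x : (m <= m')%N -> phi m a b x <= phi m' a b x.
Proof. by move=> mm'; apply: ler_prod => i _; rewrite psi_ge0 psi_nd. Qed.

Lemma phi_out m a b x : ~ obox a b x -> phi m a b x = 0.
Proof.
move=> /existsNP[i /negP Hi]; rewrite /phi (bigD1 i) //= psi_out // mul0r //.
Qed.

Lemma phi_in a b x : obox a b x -> exists K, forall m, (K <= m)%N -> phi m a b x = 1.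
Proof.
move=> H.
have /choice[K HK] : forall i : 'I_k, exists K, forall m, (K <= m)%N ->
    psi m (a ord0 i) (b ord0 i) (x ord0 i) = 1.
  by move=> i; apply: psi_in; exact: H.
exists (\max_(i < k) K i)%N => m Km; rewrite /phi big1 // => i _.
by apply: HK; apply: leq_trans Km; exact: leq_bigmax.
Qed.

Lemma phi_cont m a b : continuous (phi m a b).
Proof.
move=> x; rewrite /phi.
suff H : forall s : seq 'I_k, {for x, continuous
    (fun y : 'rV[R]_k => \prod_(i <- s) psi m (a ord0 i) (b ord0 i) (y ord0 i))}.
  exact: H.
elim => [|i s IH].
  have -> : (fun y : 'rV[R]_k => \prod_(i <- [::]) psi m (a ord0 i) (b ord0 i) (y ord0 i)) = fun=> 1.
    by apply/funext => y; rewrite big_nil.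
  exact: cst_continuous.
have -> : (fun y : 'rV[R]_k => \prod_(j <- i :: s) psi m (a ord0 j) (b ord0 j) (y ord0 j)) =
  (fun y : 'rV[R]_k => psi m (a ord0 i) (b ord0 i) (y ord0 i) *
     \prod_(j <- s) psi m (a ord0 j) (b ord0 j) (y ord0 j)).
  by apply/funext => y; rewrite big_cons.
apply: continuousM => //.
apply: (@continuous_comp _ _ _ (fun y : 'rV[R]_k => y ord0 i) (psi m (a ord0 i) (b ord0 i))).
  exact: coord_continuous.
exact: psi_cont.
Qed.

Definition cbox a b : set 'rV[R]_k :=
  [set v | forall i, `[a ord0 i, b ord0 i]%classic (v ord0 i)].

Lemma compact_cbox a b : compact (cbox a b).
Proof. by apply: (@rV_compact _ _ (fun i => `[a ord0 i, b ord0 i]%classic)) => i; exact: segment_compact. Qed.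

Lemma phi_supp m a b : compact (closure [set x | phi m a b x != 0]).
Proof.
apply: (subclosed_compact _ (@compact_cbox a b)); first exact: closed_closure.
have ccl : closed (cbox a b) by apply: compact_closed; [exact: norm_hausdorff|exact: (@compact_cbox a b)].
rewrite [X in _ `<=` X](closure_id _).1 //; apply: closure_subset.
move=> x /= H i; have : obox a b x.
  by apply: contrapT => /phi_out h; move: H; rewrite h eqxx.
move=> /(_ i) /andP[h1 h2]; rewrite /= in_itv /= (ltW h1) (ltW h2) //.
Qed.

Lemma phi_meas m a b : measurable_fun (setT : set (Borel R k)) (phi m a b).
Proof.
apply: (measurability _ (RGenOpens.measurableE R)).
move=> _ [_ [c [e ->] <-]]; rewrite setTI; apply: sub_sigma_algebra.
have := @phi_cont m a b; move/continuousP; apply; exact: interval_open.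
Qed.

End Phi.
Arguments phi {R k}.
Arguments cbox {R k}.

Section Kern.
Variables (R : realType) (N k : nat).
Variables (O : set (Leb R N)) (mu : 'rV[R]_N -> {measure set (Borel R k) -> \bar R}).
Local Open Scope ereal_scope.

Definition kk (x : Leb R N) : {measure set (Borel R k) -> \bar R} :=
  if x \in O then mu x else mzero.

Lemma kkE x U : kk x U = ((fun x => mu x U) \_ O) x.
Proof. by rewrite /kk /patch; case: ifP. Qed.

Lemma Borel_obox (a b : 'rV[R]_k) : measurable (obox a b : set (Borel R k)).
Proof.
have -> : obox a b = \bigcap_(i in [set: 'I_k])
    (hs i (b ord0 i) `&` [set x | (a ord0 i < x ord0 i)%R]).
  apply/seteqP; split => x.
    by move=> H i _; have /andP[h1 h2] := H i; split.
  by move=> H i; have [h1 h2] := H i Logic.I; rewrite h1 h2.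
apply: fin_bigcap_measurable; first exact: finite_finset.
move=> i _; apply: measurableI; apply: Borel_open; first exact: open_hs.
apply: (@open_comp _ _ (fun x : 'rV[R]_k => x ord0 i) [set y | (a ord0 i < y)%R]).
  by move=> x _; exact: coord_continuous.
exact: open_gt.
Qed.

Hypothesis mO : measurable O.
Hypothesis hw : forall phi : 'rV[R]_k -> R, continuous phi ->
  compact (closure [set xi | phi xi != 0%R]) ->
  measurable_fun O (fun x => \int[mu x]_xi (phi xi)%:E).
Lemma int_phi_cvg (m : {measure set (Borel R k) -> \bar R}) a b :
  \int[m]_xi (phi n a b xi)%:E @[n --> \oo] --> m (obox a b).
Proof.
have := @cvg_monotone_convergence _ _ R m setT measurableT
  (fun n xi => (phi n a b xi)%:E) _ _ _.
have <- : \int[m]_xi (\1_(obox a b) xi)%:E = m (obox a b).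
  by rewrite integral_indic ?setIT //; exact: Borel_obox.
have -> : (fun x => limn (fun n => (phi n a b x)%:E)) = fun x => (\1_(obox a b) x)%:E.
  apply/funext => x; rewrite indicE.
  have [bx|bx] := pselect (obox a b x).
    rewrite mem_set //; apply/cvg_lim => //; apply: cvg_near_cst.
    have [K HK] := phi_in bx; exists K => // m' /= Km; rewrite HK //.
  rewrite memNset //.
  have -> : (fun n => (phi n a b x)%:E) = fun=> 0%:E.
    by apply/funext => n; rewrite phi_out.
  by rewrite lim_cst.
apply.
- by move=> n; apply/measurable_EFinP; exact: phi_meas.
- by move=> n x _; rewrite lee_fin phi_ge0.
- by move=> x _ p q pq; rewrite lee_fin phi_nd.
Qed.

Lemma kk_obox_meas a b : measurable_fun setT (fun x => kk x (obox a b)).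
Proof.
under eq_fun do rewrite kkE.
apply/(measurable_restrictT _ mO).
apply: (@emeasurable_fun_cvg _ _ _ O (fun n x => \int[mu x]_xi (phi n a b xi)%:E)).
  by move=> n; apply: hw; [exact: phi_cont|exact: phi_supp].
by move=> x _; exact: int_phi_cvg.
Qed.



Lemma open_sigma_obox (V : set 'rV[R]_k) : open V ->
  <<s [set A | exists a b, A = obox a b] >> V.
Proof.
move=> oV; rewrite (open_ratbox oV).
set G := [set A | exists a b, A = obox a b].
have -> : \bigcup_pq ratbox V pq =
    \bigcup_n (if @unpickle ('rV[rat]_k * 'rV[rat]_k)%type n is Some pq then ratbox V pq else set0).
  apply/seteqP; split => x.
    by move=> [pq _ h]; exists (pickle pq) => //; rewrite pickleK.
  by move=> [n _]; case: (unpickle n) => [pq h|//]; exists pq.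
have [s0 _ sU] := @smallest_sigma_algebra _ setT G.
apply: sU => n.
case: (unpickle n) => [pq|//].
case: (ratbox_cases V pq) => -> //.
by apply: sub_sigma_algebra; exists (rr pq.1), (rr pq.2).
Qed.

Definition Dn (n : nat) : set 'rV[R]_k := obox (const_mx (- n%:R)%R) (const_mx (n%:R)%R).

Lemma oboxI (a b c e : 'rV[R]_k) : obox a b `&` obox c e =
  obox (\row_i Num.max (a ord0 i) (c ord0 i)) (\row_i Num.min (b ord0 i) (e ord0 i)).
Proof.
apply/seteqP; split => x /=.
  move=> [H1 H2] i; rewrite !mxE gt_max lt_min.
  by have /andP[-> ->] := H1 i; have /andP[-> ->] := H2 i.
move=> H; split => i; have := H i; rewrite !mxE gt_max lt_min.
  by move=> /andP[/andP[-> _] /andP[-> _]].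
by move=> /andP[/andP[_ ->] /andP[_ ->]].
Qed.

Lemma bigcup_Dn : \bigcup_n Dn n = setT.
Proof.
apply/seteqP; split => // x _.
exists (\max_(i < k) (Num.trunc `|x ord0 i|).+1)%N => //= i; rewrite !mxE.
have h : (`|x ord0 i| < (\max_(i < k) (Num.trunc `|x ord0 i|).+1)%N%:R)%R.
  apply: lt_le_trans (truncnS_gt _) _; rewrite ler_nat.
  exact: (@leq_bigmax _ (fun i => (Num.trunc `|x ord0 i|).+1)).
by rewrite -ltr_norml.
Qed.

Lemma nd_Dn : nondecreasing_seq Dn.
Proof.
move=> p q pq; apply/subsetPset => x /= H i; rewrite !mxE.
have := H i; rewrite !mxE => /andP[g1 g2].
have pq' : (p%:R <= q%:R :> R)%R by rewrite ler_nat.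
apply/andP; split; [apply: le_lt_trans g1; rewrite lerN2 //|apply: lt_le_trans g2 _ => //].
Qed.

Lemma Borel_closed (C : set 'rV[R]_k) : closed C -> measurable (C : set (Borel R k)).
Proof.
move=> cC; rewrite -[C]setCK; apply: measurableC; apply: Borel_open.
exact: closed_openC.
Qed.

Hypothesis hc : forall x, O x -> forall K : set 'rV[R]_k, compact K -> mu x K < +oo.

Lemma kk_Dn_fin x n : kk x (Dn n) < +oo.
Proof.
rewrite kkE /patch; case: ifPn => [/set_mem Ox|_]; last by rewrite ltey.
have cc := @compact_cbox R k (const_mx (- n%:R)%R) (const_mx (n%:R)%R).
apply: le_lt_trans (hc Ox cc).
apply: le_measure; rewrite ?inE.
- exact: Borel_obox.
- apply: Borel_closed; apply: compact_closed => //; exact: norm_hausdorff.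
- move=> y /= H i; have /andP[g1 g2] := H i; rewrite /= in_itv /= (ltW g1) (ltW g2) //.
Qed.

Lemma kk_measD n (U : set (Borel R k)) : measurable U -> measurable_fun setT (fun x => kk x (U `&` Dn n)).
Proof.
have mDn : measurable (Dn n : set (Borel R k)) by exact: Borel_obox.
pose Hs := [set U : set (Borel R k) | measurable U /\
  measurable_fun setT (fun x => kk x (U `&` Dn n))].
pose G := [set A : set 'rV[R]_k | exists a b, A = obox a b].
have GI : setI_closed G.
  by move=> _ _ [a [b ->]] [c [e ->]]; rewrite oboxI; eexists; eexists.
have ndH : ndseq_closed Hs.
  move=> F ndF HF; split.
    by apply: bigcupT_measurable => i; have [] := HF i.
  apply: (@emeasurable_fun_cvg _ _ _ setT (fun m x => kk x (F m `&` Dn n))).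
    by move=> m; have [] := HF m.
  move=> x _.
  have mF : forall i, measurable (F i `&` Dn n).
    by move=> i; apply: measurableI => //; have [] := HF i.
  have mUF : measurable (\bigcup_i (F i `&` Dn n)) by exact: bigcupT_measurable.
  have ndF' : nondecreasing_seq (fun i => F i `&` Dn n).
    move=> p q pq; apply/subsetPset; apply: setSI; exact/subsetPset/ndF.
  rewrite setI_bigcupl.
  exact: (nondecreasing_cvg_mu (mu := kk x) mF mUF ndF').
have GH : G `<=` Hs.
  move=> _ [a [b ->]]; split; first exact: Borel_obox.
  by rewrite /Dn oboxI; exact: kk_obox_meas.
have HT : Hs setT.
  split; first exact: measurableT.
  by rewrite setTI; exact: kk_obox_meas.
have lam : lambda_system setT Hs.
  split; [by move=> ? ?|exact: HT| |exact: ndH].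
  move=> A B BA [mA hA] [mB hB]; split; first exact: measurableD.
  have -> : (fun x => kk x ((A `\` B) `&` Dn n)) =
      (fun x => kk x (A `&` Dn n) - kk x (B `&` Dn n)).
    apply/funext => x.
    have -> : (A `\` B) `&` Dn n = (A `&` Dn n) `\` (B `&` Dn n).
      apply/seteqP; split => y /=.
        by move=> [[Ay nBy] Dy]; split => // -[].
      by move=> [[Ay Dy] nBD]; split => //; split => // By; exact: nBD.
    rewrite measureD.
    - congr (_ - _); congr (kk x _); apply/seteqP; split => y /=.
        by move=> [_ []].
      by move=> [By Dy]; split => //; split => //; exact: BA.
    - exact: measurableI.
    - exact: measurableI.
    - apply: le_lt_trans (kk_Dn_fin x n).
      apply: le_measure; [rewrite inE; exact: measurableI|rewrite inE; exact: mDn|by move=> y []].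
  exact: emeasurable_funB.
have sub := lambda_system_subset GI lam GH (fun _ _ => @subsetT _ _).
move=> mU; suff : <<s setT, G >> U by move/sub => [].
apply: (smallest_sub (@smallest_sigma_algebra _ setT G) _ mU).
exact: open_sigma_obox.
Qed.

Lemma kk_meas (U : set (Borel R k)) : measurable U -> measurable_fun setT (fun x => kk x U).
Proof.
move=> mU.
apply: (@emeasurable_fun_cvg _ _ _ setT (fun n x => kk x (U `&` Dn n))).
  by move=> n; exact: kk_measD.
move=> x _.
have mF : forall i, measurable (U `&` Dn i : set (Borel R k)).
  by move=> i; apply: measurableI => //; exact: Borel_obox.
have mUF : measurable (\bigcup_i (U `&` Dn i)) by exact: bigcupT_measurable.
have ndF : nondecreasing_seq (fun i => U `&` Dn i).
  move=> p q pq; apply/subsetPset; apply: setIS; exact/subsetPset/nd_Dn.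
have := nondecreasing_cvg_mu (mu := kk x) mF mUF ndF.
by rewrite -setI_bigcupr bigcup_Dn setIT.
Qed.

End Kern.

Definition kker (R : realType) (N k : nat) (O : set (Leb R N))
  (mu : 'rV[R]_N -> {measure set (Borel R k) -> \bar R})
  (mO : measurable O)
  (hw : forall phi : 'rV[R]_k -> R, continuous phi ->
     compact (closure [set xi | phi xi != 0%R]) ->
     measurable_fun O (fun x => (\int[mu x]_xi (phi xi)%:E)%E))
  (hc : forall x, O x -> forall K : set 'rV[R]_k, compact K -> (mu x K < +oo)%E) :
  Leb R N -> {measure set (Borel R k) -> \bar R} := kk O mu.

Section kker_inst.
Variables (R : realType) (N k : nat) (O : set (Leb R N))
  (mu : 'rV[R]_N -> {measure set (Borel R k) -> \bar R})
  (mO : measurable O)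
  (hw : forall phi : 'rV[R]_k -> R, continuous phi ->
     compact (closure [set xi | phi xi != 0%R]) ->
     measurable_fun O (fun x => (\int[mu x]_xi (phi xi)%:E)%E))
  (hc : forall x, O x -> forall K : set 'rV[R]_k, compact K -> (mu x K < +oo)%E).
Local Open Scope ereal_scope.

Let kker_meas U : measurable U -> measurable_fun setT ((kker mO hw hc) ^~ U).
Proof. exact: kk_meas. Qed.

HB.instance Definition _ := isKernel.Build _ _ (Leb R N) (Borel R k) R
  (kker mO hw hc) kker_meas.

Lemma kkerE x U : kker mO hw hc x U = if x \in O then mu x U else 0.
Proof. by rewrite /kker /kk; case: ifP. Qed.

Lemma kker_section (A : set (Leb R N * Borel R k)) : measurable A ->
  measurable_fun setT (fun x => kker mO hw hc x (xsection A x)).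
Proof.
move=> mA.
apply: (@emeasurable_fun_cvg _ _ _ setT
  (fun n x => kker mO hw hc x (xsection A x `&` Dn n))).
  move=> n.
  have mD : measurable (Dn n : set (Borel R k)) by exact: Borel_obox.
  have := @measurable_prod_subset_xsection_kernel _ _ _ _ _ (kker mO hw hc) _ mD.
  move=> /(_ _ A mA) [].
    move=> x; exists (fine (kker mO hw hc x (Dn n)) + 1)%R => X mX.
    have fin0 : kker mO hw hc x (Dn n) \is a fin_num.
      rewrite ge0_fin_numE //; exact: kk_Dn_fin.
    rewrite /mrestr; apply: (@le_lt_trans _ _ (kker mO hw hc x (Dn n))).
      by apply: le_measure; [rewrite inE; exact: measurableI|rewrite inE|move=> y []].
    by rewrite -{1}(fineK fin0) lte_fin ltrDl.
  by move=> _; rewrite /mrestr.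
move=> x _.
have mxs : measurable (xsection A x) by exact: measurable_xsection.
have mF : forall i, measurable (xsection A x `&` Dn i : set (Borel R k)).
  by move=> i; apply: measurableI => //; exact: Borel_obox.
have mUF : measurable (\bigcup_i (xsection A x `&` Dn i)) by exact: bigcupT_measurable.
have ndF : nondecreasing_seq (fun i => xsection A x `&` Dn i).
  move=> p q pq; apply/subsetPset; apply: setIS; exact/subsetPset/nd_Dn.
have := nondecreasing_cvg_mu (mu := kker mO hw hc x) mF mUF ndF.
by rewrite -setI_bigcupr bigcup_Dn setIT.
Qed.

Import HBNNSimple.

Lemma kker_int (g : Leb R N * Borel R k -> \bar R) :
  (forall z, 0 <= g z) -> measurable_fun setT g ->
  measurable_fun setT (fun x => \int[kker mO hw hc x]_y g (x, y)).
Proof.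
move=> g0 mg.
pose k_ := nnsfun_approx measurableT mg.
apply: (@measurable_fun_xsection_integral _ _ _ _ _ g (kker mO hw hc) k_).
- by move=> a b ab; exact/nd_nnsfun_approx.
- by move=> z; exact/cvg_nnsfun_approx.
- by move=> n r; apply: kker_section.
Qed.

End kker_inst.

Section Esssup.
Local Open Scope ereal_scope.
Context (dT : measure_display) (T : measurableType dT) (R : realType).
Variables (mu : {measure set T -> \bar R}) (D : set T) (g : T -> \bar R).

Lemma esssup_ge0 : 0 <= esssup mu D g.
Proof. by apply: le_ereal_inf_tmp => M []. Qed.

Lemma esssup_le (M : \bar R) : 0 <= M ->
  (\forall x \ae mu, D x -> g x <= M) -> esssup mu D g <= M.
Proof. by move=> M0 H; apply: ereal_inf_lbound; split. Qed.

Lemma ae_le_esssup : \forall x \ae mu, D x -> g x <= esssup mu D g.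
Proof.
set S := esssup mu D g.
have [Sy|Sy] := eqVneq S +oo.
  by rewrite Sy; apply: nearW => x _; exact: leey.
have Sfin : S \is a fin_num.
  by rewrite ge0_fin_numE ?esssup_ge0 // lt_neqAle Sy leey.
have /choice [Mf HM] : forall n : nat, exists M,
    (0 <= M /\ (\forall x \ae mu, D x -> g x <= M)) /\ M < S + (n.+1%:R^-1)%:E.
  move=> n; have [M HM1 HM2] := @lb_ereal_inf_adherent R _ (n.+1%:R^-1)%R
    ltac:(by rewrite invr_gt0 ltr0n) Sfin.
  by exists M.
have : \forall x \ae mu, forall n, D x -> g x <= Mf n.
  by apply: ae_foralln => n; exact: (HM n).1.2.
apply: filterS => x Hx Dx.
apply/lee_addgt0Pr => e e0.
have [n hn] := ltr_add_invr e0; rewrite add0r in hn.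
apply: le_trans (Hx n Dx) _; apply: le_trans (ltW (HM n).2) _.
by rewrite leeD2l // lee_fin ltW.
Qed.

End Esssup.

Section Limits.
Variable R : realType.

Lemma cvg_inv0 : (q^-1 : R) @[q --> +oo] --> (0 : R).
Proof.
apply/cvgrPdist_lt => e e0; near=> q.
have q0 : 0 < q by near: q; apply: nbhs_pinfty_gt; exact: num_real.
have qe : e^-1 < q by near: q; apply: nbhs_pinfty_gt; exact: num_real.
rewrite sub0r normrN ger0_norm ?invr_ge0 ?(ltW q0) //.
by rewrite -[e]invrK ltf_pV2 // ?posrE ?invr_gt0.
Unshelve. all: end_near. Qed.

Lemma cvg_powR_inv (c : R) : 0 < c -> (c `^ (q^-1)) @[q --> +oo] --> (1 : R).
Proof.
move=> c0.
have -> : (fun q : R => c `^ q^-1) = (fun q => expR (q^-1 * ln c)).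
  by apply/funext => q; rewrite /powR gt_eqF.
rewrite -expR0; apply: continuous_cvg; first exact: continuous_expR.
rewrite -(mul0r (ln c)); apply: cvgMl; exact: cvg_inv0.
Qed.

End Limits.

Lemma FF_meas (R : realType) (N d k : nat) (Omega : set (Leb R N))
  (f : 'rV[R]_N -> 'rV[R]_d -> 'rV[R]_k -> R) (v : 'rV[R]_N -> 'rV[R]_d) :
  measurable Omega ->
  measurable_fun (Omega `*` [set: Borel R d * Borel R k])
    (fun p : Leb R N * (Borel R d * Borel R k) => f p.1 p.2.1 p.2.2) ->
  measurable_fun Omega (v : Leb R N -> Borel R d) ->
  measurable_fun (Omega `*` [set: Borel R k])
    (fun p : Leb R N * Borel R k => f p.1 (v p.1) p.2).
Proof.
move=> mO mf mv.
pose v' := fun x : Leb R N => if x \in Omega then v x else (0 : 'rV[R]_d).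
have mv' : measurable_fun setT (v' : Leb R N -> Borel R d).
  move=> _ Y mY; rewrite setTI.
  have -> : v' @^-1` Y = (Omega `&` v @^-1` Y) `|` (~` Omega `&` [set x | Y (0 : 'rV[R]_d)]).
    apply/seteqP; split => x; rewrite /v' /preimage /=.
      by case: ifPn => [/set_mem Ox Yx|/negP Ox Yx]; [left|right; split => // /mem_set].
    case=> [[Ox Yx]|[nOx Y0]]; first by rewrite mem_set.
    by rewrite memNset.
  apply: measurableU; first exact: mv.
  apply: measurableI; first exact: measurableC.
  have [Y0|nY0] := pselect (Y (0 : 'rV[R]_d)).
    by have -> : [set _ : Leb R N | Y (0 : 'rV[R]_d)] = setT by apply/seteqP; split.
  by have -> : [set _ : Leb R N | Y (0 : 'rV[R]_d)] = set0 by apply/seteqP; split.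
pose h := fun p : Leb R N * Borel R k => (p.1, ((v' p.1 : Borel R d), p.2)).
have mh : measurable_fun setT h.
  apply: measurable_fun_pair; first exact: measurable_fst.
  apply: measurable_fun_pair; last exact: measurable_snd.
  exact: measurableT_comp mv' measurable_fst.
apply: (@eq_measurable_fun _ _ _ _ _ ((fun p : Leb R N * (Borel R d * Borel R k) =>
    f p.1 p.2.1 p.2.2) \o h)).
  by move=> [x y]; rewrite inE => -[/= Ox _]; rewrite /h /v' /= (mem_set Ox).
apply: (measurable_comp (F := Omega `*` [set: Borel R d * Borel R k])) => //.
- exact: measurableX.
- by move=> _ [[x y] [/= Ox _] <-]; split.
- exact: measurable_funS mh.
Qed.

Unset Implicit Arguments.

Theorem lemma3p4 (R : realType) (N d k : nat) (Omega : set 'rV[R]_N)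
    (f : 'rV[R]_N -> 'rV[R]_d -> 'rV[R]_k -> R)
    (mu : 'rV[R]_N -> {measure set (Borel R k) -> \bar R})
    (v : 'rV[R]_N -> 'rV[R]_d) :
  open Omega ->
  (lebesgueN R N Omega < +oo)%E ->
  normal_integrand Omega f ->
  (forall x y xi, Omega x -> 0 <= f x y xi) ->
  young_measure Omega mu ->
  measurable_fun (Omega : set (Leb R N)) (v : Leb R N -> Borel R d) ->
  (poweR (\int[lebesgueN R N]_(x in (Omega : set (Leb R N)))
            \int[mu x]_xi ((f x (v x) xi) `^ q)%:E) q^-1)%E
    @[q --> +oo]
  --> esssup (lebesgueN R N) Omega
        (fun x => esssup (mu x) [set: Borel R k] (fun xi => (f x (v x) xi)%:E)).
Proof.
move=> oO finO [mf _] f0 [yc yw yae] mv.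
have mO : measurable (Omega : set (Leb R N)) := Leb_open oO.
have mOT : measurable ((Omega : set (Leb R N)) `*` [set: Borel R k]) := measurableX mO measurableT.
pose K := kker mO yw yc.
have KE : forall x, Omega x -> K x = mu x.
  by move=> x Ox; rewrite /K /kker /kk (mem_set Ox).
pose FF := fun p : Leb R N * Borel R k => f p.1 (v p.1) p.2.
have mFF : measurable_fun ((Omega : set (Leb R N)) `*` [set: Borel R k]) FF := FF_meas mO mf mv.
have mFx : forall x, Omega x -> measurable_fun [set: Borel R k] (fun y => f x (v x) y).
  move=> x Ox.
  have := measurable_fun_pair2 (x : Leb R N) ((measurable_restrictT _ mOT).1 mFF).
  apply: eq_measurable_fun => y _; rewrite patchE mem_set //.
pose Gq (q : R) := fun x : Leb R N => (\int[mu x]_xi ((f x (v x) xi) `^ q)%:E)%E.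
have mG : forall q, measurable_fun (Omega : set (Leb R N)) (Gq q).
  move=> q.
  pose gq := (fun p : Leb R N * Borel R k => ((FF p) `^ q)%:E) \_ ((Omega : set (Leb R N)) `*` [set: Borel R k]).
  have mgq : measurable_fun setT gq.
    apply/(measurable_restrictT _ mOT); apply/measurable_EFinP.
    exact: (measurableT_comp (measurable_powR q) mFF).
  have gq0 : forall z, (0 <= gq z)%E.
    by move=> z; rewrite /gq patchE; case: ifP => _; rewrite ?lee_fin ?powR_ge0.
  have H := kker_int mO yw yc gq0 mgq.
  have H' := measurable_funS measurableT (@subsetT _ (Omega : set (Leb R N))) H.
  apply: eq_measurable_fun H' => x /set_mem Ox.
  rewrite /kker /kk (mem_set Ox) /Gq; apply: eq_integral => y _.
  by rewrite /gq patchE mem_set.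
pose h := fun x => esssup (mu x) [set: Borel R k] (fun xi => (f x (v x) xi)%:E).
pose L := lebesgueN R N.
set M := esssup L Omega h.
have M0 : (0 <= M)%E by exact: esssup_ge0.
pose I q := (\int[L]_(x in (Omega : set (Leb R N))) Gq q x)%E.
have I0 : forall q, (0 <= I q)%E.
  move=> q; apply: integral_ge0 => x _; apply: integral_ge0 => y _.
  by rewrite lee_fin powR_ge0.
have upper : forall m : R, M = m%:E -> forall q : R, 0 < q ->
    (poweR (I q) q^-1 <= (m * (fine (L Omega) + 1) `^ q^-1)%:E)%E.
  move=> m Mm q q0.
  have m0 : 0 <= m by rewrite -lee_fin -Mm.
  have LOfin : L Omega \is a fin_num by rewrite ge0_fin_numE.
  have LO0 : 0 <= fine (L Omega) by apply: fine_ge0.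
  set c' := fine (L Omega) + 1.
  have c'0 : 0 < c' by rewrite /c'; lra.
  have aeG : \forall x \ae L, Omega x -> (Gq q x <= (m `^ q)%:E)%E.
    have H1 := ae_le_esssup L Omega h.
    apply: (filterS2 _ _ H1 yae) => x hx mx Ox.
    have hxm : (h x <= m%:E)%E by rewrite -Mm; exact: hx Ox.
    rewrite /Gq.
    apply: (@le_trans _ _ (\int[mu x]_(y in setT) (m `^ q)%:E)%E).
      apply: ae_ge0_le_integral => //.
      - by move=> y _; rewrite lee_fin powR_ge0.
      - apply/measurable_EFinP; exact: (measurableT_comp (measurable_powR q) (mFx x Ox)).
      - by move=> y _; rewrite lee_fin powR_ge0.
      - have := ae_le_esssup (mu x) setT (fun xi => (f x (v x) xi)%:E).
        apply: filterS => y Hy _.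
        have := le_trans (Hy Logic.I) hxm; rewrite lee_fin => fym.
        rewrite lee_fin; apply: ge0_ler_powR => //; first exact: ltW.
        by rewrite nnegrE; exact: f0.
    rewrite integral_cst //.
    rewrite -[leRHS]mule1; apply: lee_pmul => //; first by rewrite lee_fin powR_ge0.
    exact: mx Ox.
  have IU : (I q <= ((m `^ q) * c')%:E)%E.
    apply: (@le_trans _ _ (\int[L]_(x in (Omega : set (Leb R N))) (m `^ q)%:E)%E).
      apply: ae_ge0_le_integral => //.
      - by move=> x _; apply: integral_ge0 => y _; rewrite lee_fin powR_ge0.
      - by move=> x _; rewrite lee_fin powR_ge0.
    rewrite integral_cst //.
    apply: (@le_trans _ _ ((m `^ q)%:E * (fine (L Omega))%:E)%E).
      by rewrite fineK //; exact: lexx.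
    rewrite -EFinM lee_fin.
    by rewrite ler_wpM2l ?powR_ge0 // /c' lerDl ler01.
  have -> : ((m * c' `^ q^-1)%:E) = poweR (((m `^ q) * c')%:E) q^-1.
    rewrite poweR_EFin powRM ?powR_ge0 ?(ltW c'0) //.
    by rewrite -powRrM mulfV ?gt_eqF // powRr1.
  apply: gt0_ler_poweR => //.
  - by rewrite invr_ge0 ltW.
  - by rewrite in_itv /= I0 leey.
  - by rewrite in_itv /= lee_fin mulr_ge0 ?powR_ge0 ?(ltW c'0) // leey.
have lower : forall m : R, 0 <= m -> (m%:E < M)%E ->
    \forall q \near +oo, (m%:E < poweR (I q) q^-1)%E.
  move=> m m0 mM.
  have [m2 [mm2 m2M]] : exists m2 : R, m < m2 /\ (m2%:E < M)%E.
    move: mM M0; case: (M) => [M'| |] //; rewrite ?lte_fin => mM' _.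
      have [h1 h2] := midf_lt mM'.
      by exists ((m + M') / 2); split => //; rewrite lte_fin.
    by exists (m + 1); split; [lra|exact: ltey].
  have m20 : 0 < m2 by lra.
  pose S := fun x : 'rV[R]_N => [set y : Borel R k | m2 < f x (v x) y].
  have mS : forall x, Omega x -> measurable (S x).
    move=> x Ox.
    have -> : S x = setT `&` (fun y => f x (v x) y) @^-1` `]m2, +oo[%classic.
      apply/seteqP; split => y /=.
        by move=> H2; split => //; rewrite /= in_itv /= andbT.
      by move=> [_]; rewrite /= in_itv /= andbT.
    by apply: (mFx x Ox) => //; exact: measurable_itv.
  pose cx := fun x : Leb R N => mu x (S x).
  have mcx : measurable_fun (Omega : set (Leb R N)) cx.
    pose A := ((Omega : set (Leb R N)) `*` [set: Borel R k]) `&` FF @^-1` `]m2, +oo[%classic.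
    have mA : measurable A by apply: mFF => //; exact: measurable_itv.
    have H := kker_section mO yw yc mA.
    have H' := measurable_funS measurableT (@subsetT _ (Omega : set (Leb R N))) H.
    apply: eq_measurable_fun H' => x /set_mem Ox.
    rewrite /kker /kk (mem_set Ox) /cx; congr (mu x _).
    apply/seteqP; split => y; rewrite /xsection /A /S /= inE /= in_itv /= andbT.
      by move=> [_ ->].
    by move=> H2; split.
  pose c := (\int[L]_(x in (Omega : set (Leb R N))) cx x)%E.
  have cx0 : forall x, (0 <= cx x)%E by move=> x; exact: measure_ge0.
  have c0 : (0 < c)%E.
    rewrite lt_neqAle integral_ge0 ?andbT; last by move=> x _.
    apply/negP => /eqP c00.
    have ae0 : ae_eq L Omega cx (cst 0).
      apply/(ae_eq_integral_abs L mO mcx).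
      rewrite c00; apply: eq_integral => x _; rewrite gee0_abs //.
    have : (M <= m2%:E)%E.
      apply: esssup_le; first by rewrite lee_fin ltW.
      apply: filterS ae0 => x Hx Ox.
      apply: esssup_le; first by rewrite lee_fin ltW.
      exists (S x); split; [exact: mS|exact: Hx Ox|].
      move=> y /= Hy; rewrite /S /= ltNge; apply/negP => H2; apply: Hy => _.
      by rewrite lee_fin.
    by rewrite leNgt m2M.
  have cfin : (c < +oo)%E.
    apply: (@le_lt_trans _ _ (lebesgueN R N Omega)) => //.
    have H3 : (c <= \int[L]_(x in (Omega : set (Leb R N))) (cst 1%E x))%E.
      apply: ae_ge0_le_integral; [exact: mO|by move=> x _|exact: mcx|
        by move=> x _; rewrite lee01|exact: measurable_cst|].
      case: yae => A [mA A0 HA]; exists A; split => // x /= Hx; apply: HA => /= H2.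
      apply: Hx => Ox; apply: le_trans (H2 Ox).
      by apply: le_measure; rewrite ?inE //; exact: mS.
    apply: le_trans H3 _.
    by rewrite integral_cst // mul1e; exact: lexx.
  have cf : c = (fine c)%:E by rewrite fineK // ge0_fin_numE // ltW.
  have cf0 : 0 < fine c by rewrite -lte_fin -cf.
  have Ilow : forall q, 0 < q -> (((m2 `^ q) * fine c)%:E <= I q)%E.
    move=> q q0.
    rewrite EFinM -cf -ge0_integralZl //; last by rewrite lee_fin powR_ge0.
    apply: ge0_le_integral => //.
    - by move=> x _; rewrite mule_ge0 // lee_fin powR_ge0.
    - exact: measurable_funeM.
    - move=> x Ox.
      rewrite /Gq /cx.
      have <- : (\int[mu x]_(y in setT) (\1_(S x) y)%:E)%E = mu x (S x).
        by rewrite integral_indic ?setIT //; exact: mS.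
      rewrite -ge0_integralZl //; last 2 first.
      + by apply/measurable_EFinP; apply: measurable_indic; exact: mS.
      + by rewrite lee_fin powR_ge0.
      apply: ge0_le_integral => //.
      + by move=> y _; rewrite mule_ge0 // lee_fin ?powR_ge0 // indicE; case: (_ \in _).
      + apply: measurable_funeM; apply/measurable_EFinP; apply: measurable_indic; exact: mS.
      + apply/measurable_EFinP; exact: (measurableT_comp (measurable_powR q) (mFx x Ox)).
      + move=> y _; rewrite indicE; case: (boolP (y \in S x)) => [/set_mem ySx|_].
          rewrite mule1 lee_fin; apply: ge0_ler_powR; first exact: ltW.
          * by rewrite nnegrE ltW.
          * by rewrite nnegrE; exact: f0.
          * exact: ltW.
        by rewrite mule0 lee_fin powR_ge0.
  have cvg1 : ((m2 * fine c `^ q^-1) : R) @[q --> +oo] --> m2.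
    rewrite -[X in _ --> X]mulr1; apply: cvgMr; exact: cvg_powR_inv.
  near=> q.
  have q0 : 0 < q by near: q; apply: nbhs_pinfty_gt; exact: num_real.
  apply: (@lt_le_trans _ _ (m2 * fine c `^ q^-1)%:E).
    by rewrite lte_fin; near: q; exact: (cvgr_gt _ cvg1).
  have -> : ((m2 * fine c `^ q^-1)%:E) = poweR (((m2 `^ q) * fine c)%:E) q^-1.
    rewrite poweR_EFin powRM ?powR_ge0 ?(ltW cf0) //.
    by rewrite -powRrM mulfV ?gt_eqF // powRr1 // ltW.
  apply: gt0_ler_poweR => //.
  - by rewrite invr_ge0 ltW.
  - by rewrite in_itv /= lee_fin mulr_ge0 ?powR_ge0 ?(ltW cf0) // leey.
  - by rewrite in_itv /= I0 leey.
  - exact: Ilow.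
have LO0 : 0 < fine (L Omega) + 1.
  have := @fine_ge0 R (L Omega) (measure_ge0 _ _); lra.
have [Mfin|Minf] : M \is a fin_num \/ M = +oo%E.
  by move: M0; case: (M) => [M'| |] //= _; [left|right].
- have MM : M = (fine M)%:E by rewrite fineK.
  set M' := fine M in MM *.
  have M'0 : 0 <= M' by rewrite -lee_fin -MM.
  have lowM : forall m, 0 <= m -> m < M' ->
      \forall q \near +oo, (m%:E < poweR (I q) q^-1)%E.
    by move=> m m0 mM; apply: lower => //; rewrite MM lte_fin.
  have cvgU : (M' * (fine (L Omega) + 1) `^ q^-1) @[q --> +oo] --> M'.
    rewrite -[X in _ --> X]mulr1; apply: cvgMr; exact: cvg_powR_inv.
  have Ifin : forall q, 0 < q -> poweR (I q) q^-1 \is a fin_num.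
    move=> q q0; rewrite ge0_fin_numE ?poweR_ge0 //.
    by apply: le_lt_trans (upper M' MM q q0) _; exact: ltey.
  rewrite MM; apply/fine_cvgP; split.
    near=> q.
    have q0 : 0 < q by near: q; apply: nbhs_pinfty_gt; exact: num_real.
    exact: Ifin.
  apply/cvgrPdist_lt => e e0.
  near=> q.
  have q0 : 0 < q by near: q; apply: nbhs_pinfty_gt; exact: num_real.
  have up : fine (poweR (I q) q^-1) < M' + e.
    have := upper M' MM q q0; rewrite -(fineK (Ifin q q0)) lee_fin => H.
    apply: le_lt_trans H _.
    near: q; apply: (cvgr_lt _ cvgU); lra.
  have lo : M' - e < fine (poweR (I q) q^-1).
    have H : 0 <= M' - e -> (((M' - e)%:E) < poweR (I q) q^-1)%E.
      near: q.
      have [me0|me0] := leP 0 (M' - e).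
        have me1 : M' - e < M' by lra.
        by apply: (filterS _ (lowM (M' - e) me0 me1)) => q H _.
      by apply: nearW => q.
    have [me0|me0] := leP 0 (M' - e).
      by rewrite -lte_fin (fineK (Ifin q q0)); exact: H.
    apply: lt_le_trans me0 _; apply: fine_ge0; exact: poweR_ge0.
  by rewrite /= distrC ltr_distl; apply/andP; split; [exact: lo|exact: up].
- rewrite Minf; apply/cvgeyPge => A.
  near=> q.
  have H : ((Num.max A 0)%:E < poweR (I q) q^-1)%E.
    by near: q; apply: lower; [rewrite le_max lexx orbT|rewrite Minf ltey].
  by apply: le_trans (ltW H); rewrite lee_fin le_max lexx.
Unshelve. all: end_near.
Qed.
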